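(* Let $B=\bigoplus_{i\in\mathbb{Z}}B_i$ be a $\mathbb{Z}$-graded noetherian normal integral domain of characteristic zero with $e(B)=1$. Let $d\in\mathbb{N}\setminus\{0,1\}$ and assume that $d$ is a unit of $B$ and that no height-$1$ prime ideal of $B$ contains $\mathcal{X}_d$. Then every derivation $\delta:B^{(d)}\to B^{(d)}$ extends uniquely to a derivation $D:B\to B$, and if $\delta$ is locally nilpotent then so is $D$.
   Context: $e(B)=\gcd\{i\in\mathbb{Z}:B_i\neq0\}$. $B^{(d)}=\bigoplus_{i\in\mathbb{Z}}B_{di}$. $\mathcal{X}_d$ is the set of nonzero homogeneous $x\in B$ with $\gcd(\deg x,d)=1$. *)

(* Defs.v *)
From HB Require Import structures.
From mathcomp Require Import all_boot all_order all_algebra.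
From mathcomp Require Export fraction.
Set Implicit Arguments. Unset Strict Implicit. Unset Printing Implicit Defensive.
Import Order.TTheory GRing.Theory Num.Theory.
Local Open Scope ring_scope.

Section GradedDefs.
Variable B : idomainType.

(* A Z-grading of B, given by its family of homogeneous-component projections
   comp i : B -> B (comp i x = component of degree i of x).  B_i is the set of
   x with comp i x = x. *)
Definition is_Zgrading (comp : int -> B -> B) : Prop :=
  [/\ (forall i x y, comp i (x + y) = comp i x + comp i y),
      (forall x, exists s : seq int,
          (forall i, i \notin s -> comp i x = 0) /\ x = \sum_(i <- undup s) comp i x),
      (forall i j x, comp i (comp j x) = if i == j then comp j x else 0) &
      (forall i j x y, comp i x = x -> comp j y = y -> comp (i + j) (x * y) = x * y)].

Definition homog (comp : int -> B -> B) (i : int) (x : B) : Prop := comp i x = x.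

(* e(B) = 1 : the gcd of {i | B_i <> 0} equals 1 *)
Definition e_eq1 (comp : int -> B -> B) : Prop :=
  forall n : nat,
    (forall i : int, (exists x, x != 0 /\ homog comp i x) -> (n%:Z %| i)%Z) -> n = 1%N.

Definition in_veronese (comp : int -> B -> B) (d : nat) (x : B) : Prop :=
  forall i : int, ~~ (d%:Z %| i)%Z -> comp i x = 0.

Definition in_Xd (comp : int -> B -> B) (d : nat) (x : B) : Prop :=
  x != 0 /\ exists i : int, homog comp i x /\ coprimez i d%:Z.

Definition is_ideal (I : B -> Prop) : Prop :=
  [/\ I 0, (forall x y, I x -> I y -> I (x + y)) & (forall a x, I x -> I (a * x))].

Definition is_prime_ideal (P : B -> Prop) : Prop :=
  [/\ is_ideal P, ~ P 1 & (forall a b, P (a * b) -> P a \/ P b)].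

Definition is_height1_prime (P : B -> Prop) : Prop :=
  [/\ is_prime_ideal P, (exists x, x != 0 /\ P x) &
      (forall Q, is_prime_ideal Q -> (forall x, Q x -> P x) ->
          (exists x, x != 0 /\ Q x) -> forall x, P x -> Q x)].

Definition noetherian_ring : Prop :=
  forall I : nat -> B -> Prop, (forall n, is_ideal (I n)) ->
    (forall n x, I n x -> I n.+1 x) ->
    exists N, forall n, (N <= n)%N -> forall x, I n x <-> I N x.

Definition normal_domain : Prop :=
  forall (p : {poly B}) (z : {fraction B}), p \is monic ->
    root (map_poly (@FracField.tofrac B) p) z -> exists b : B, z = FracField.tofrac b.

Definition char0 : Prop := forall n : nat, (n.+1)%:R != 0 :> B.

Definition is_derivation (D : B -> B) : Prop :=
  (forall x y, D (x + y) = D x + D y) /\ (forall x y, D (x * y) = D x * y + x * D y).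

(* a derivation of the subring S (given as a predicate), represented by a map
   B -> B whose values outside S are irrelevant *)
Definition is_derivation_on (S : B -> Prop) (delta : B -> B) : Prop :=
  [/\ (forall x, S x -> S (delta x)),
      (forall x y, S x -> S y -> delta (x + y) = delta x + delta y) &
      (forall x y, S x -> S y -> delta (x * y) = delta x * y + x * delta y)].

Definition locally_nilpotent_on (S : B -> Prop) (delta : B -> B) : Prop :=
  forall x, S x -> exists n : nat, iter n delta x = 0.

End GradedDefs.

(* Main.v *)
Require Import Defs.
From HB Require Import structures.
From mathcomp Require Import all_boot all_order all_algebra.
From Stdlib Require Import Classical ClassicalEpsilon.
From mathcomp Require Import ring.
Import Order.TTheory GRing.Theory Num.Theory.
Local Open Scope ring_scope.
Set Implicit Arguments. Unset Strict Implicit.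

Section Krull.
Variable R : idomainType.
Local Notation tf := (@FracField.tofrac R).
Local Notation F := {fraction R}.

Lemma frac_repr (z : F) : exists a c, c != 0 /\ z = tf a / tf c.
Proof.
elim/quotW: z => x.
exists (x.1), (x.2); split; first exact: denom_ratioP.
have hd : tf x.2 != 0 by rewrite tofrac_eq0 denom_ratioP.
apply: (mulIf hd). rewrite mulfVK //.
unlock FracField.tofrac.
rewrite -[_ * _]/(FracField.mul _ _).
rewrite -pi_mul.
apply/eqmodP; rewrite /= equivfE /mulf !numden_Ratio ?oner_neq0 ?mulf_neq0 ?denom_ratioP ?oner_neq0 //.
by rewrite !mulr1 mulrC.
Qed.

Lemma tf0 : tf 0 = 0. Proof. exact: rmorph0. Qed.
Lemma tf1 : tf 1 = 1. Proof. exact: rmorph1. Qed.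
Lemma tfD x y : tf (x + y) = tf x + tf y. Proof. exact: rmorphD. Qed.
Lemma tfB x y : tf (x - y) = tf x - tf y. Proof. exact: rmorphB. Qed.
Lemma tfN x : tf (- x) = - tf x. Proof. exact: rmorphN. Qed.
Lemma tfM x y : tf (x * y) = tf x * tf y. Proof. exact: rmorphM. Qed.
Lemma tfX x n : tf (x ^+ n) = tf x ^+ n. Proof. exact: rmorphXn. Qed.
Lemma tfMn x n : tf (x *+ n) = tf x *+ n. Proof. exact: rmorphMn. Qed.
Lemma tf_eq0 x : (tf x == 0) = (x == 0). Proof. exact: tofrac_eq0. Qed.

Definition inB (z : F) := exists b, z = tf b.

Lemma tf_inj : injective tf.
Proof. by move=> x y /eqP; rewrite tofrac_eq => /eqP. Qed.

Hypothesis hnoeth : noetherian_ring R.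
Hypothesis hnorm : normal_domain R.

Lemma almost_int (w : F) (p : R) : p != 0 ->
  (forall n, inB (tf p * w ^+ n)) -> inB w.
Proof.
move=> p0 hw.
pose I n (zb : R) := exists r : nat -> R,
  tf zb = \sum_(k < n.+1) tf (r k) * tf p * w ^+ k.
have Iid : forall n, is_ideal (I n).
  move=> n; split.
  - exists (fun _ => 0); rewrite tf0 big1 // => k _; by rewrite !mul0r.
  - move=> x y [r hr] [r' hr']; exists (fun k => r k + r' k).
    rewrite tfD hr hr' -big_split /=; apply: eq_bigr => k _; by rewrite tfD !mulrDl.
  - move=> a x [r hr]; exists (fun k => a * r k).
    rewrite tfM hr mulr_sumr; apply: eq_bigr => k _; by rewrite tfM !mulrA.
have Iinc : forall n x, I n x -> I n.+1 x.
  move=> n x [r hr]; exists (fun k => if (k < n.+1)%N then r k else 0).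
  rewrite big_ord_recr /= ltnn tf0 !mul0r addr0 hr.
  by apply: eq_bigr => k _; rewrite /= ltn_ord.
have [N hN] := @hnoeth I Iid Iinc.
have [b hb] := hw N.+1.
have hIb : I N.+1 b.
  exists (fun k => if k == N.+1 then 1 else 0).
  rewrite big_ord_recr /= eqxx tf1 mul1r -hb big1 ?add0r //.
  by move=> k _; rewrite (ltn_eqF (ltn_ord k)) tf0 !mul0r.
have [r hr] := (hN N.+1 (leqnSn N) b).1 hIb.
have tp0 : tf p != 0 by rewrite tofrac_eq0.
have hw' : w ^+ N.+1 = \sum_(k < N.+1) tf (r k) * w ^+ k.
  apply: (mulfI tp0); rewrite hb hr mulr_sumr; apply: eq_bigr => k _.
  by rewrite -mulrA mulrCA.
pose q : {poly R} := 'X^(N.+1) - \poly_(k < N.+1) r k.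
have qm : q \is monic.
  rewrite monicE /q lead_coefDl ?lead_coefXn // size_opp size_polyXn ltnS.
  exact: size_poly.
have hroot : root (map_poly tf q) w.
  rewrite /root /q rmorphB /= map_polyXn hornerD hornerN hornerXn.
  rewrite poly_def rmorph_sum /= horner_sum hw' subr_eq0; apply/eqP.
  by apply: eq_bigr => k _; rewrite map_polyZ /= hornerZ map_polyXn hornerXn.
have [b' hb'] := @hnorm q w qm hroot.
by exists b'.
Qed.

Lemma krull (G : R -> Prop) (z : F) :
  (forall P, is_height1_prime P -> exists x, G x /\ ~ P x) ->
  (forall x, G x -> exists m, inB (tf (x ^+ m) * z)) -> inB z.
Proof.
move=> hP hG.
have [a [c [c0 zE]]] := frac_repr z.
apply: NNPP => hz.
have tc0 : tf c != 0 by rewrite tf_eq0.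
pose ann t b := inB (tf b * tf t / tf c).
have ann_id t : is_ideal (ann t).
  split.
  - by exists 0; rewrite tf0 !mul0r.
  - move=> x y [b1 h1] [b2 h2]; exists (b1 + b2).
    by rewrite tfD !mulrDl h1 h2 tfD.
  - move=> a' x [b h]; exists (a' * b).
    by rewrite !tfM -h; ring.
have ann_mul t b1 b2 : ann t (b1 * b2) <-> ann (t * b2) b1.
  rewrite /ann !tfM.
  by have -> : tf b1 * tf b2 * tf t / tf c = tf b1 * (tf t * tf b2) / tf c by ring.
have ann_sub t b' b : ann t b -> ann (t * b') b.
  move=> h; apply/ann_mul.
  have [_ _ hm] := ann_id t.
  by rewrite mulrC; apply: hm.
have hprime : exists y, (forall b, ann a b -> ann y b) /\ is_prime_ideal (ann y).
  apply: NNPP => hno.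
  pose good t := (forall b, ann a b -> ann t b) /\ ~ ann t 1.
  pose nxt t t' := good t' /\ (forall b, ann t b -> ann t' b) /\
                    exists b, ann t' b /\ ~ ann t b.
  have step : forall t, good t -> exists t', nxt t t'.
    move=> t [hs h1].
    have hnp : ~ is_prime_ideal (ann t) by move=> hp; apply: hno; exists t.
    have [a1 [b1 [hab [na nb]]]] :
        exists a1 b1, ann t (a1 * b1) /\ ~ ann t a1 /\ ~ ann t b1.
      apply: NNPP => hne; apply: hnp; split => // a1 b1 hab.
      apply: NNPP => hor; apply: hne; exists a1, b1; split => //.
      by split => h; apply: hor; [left|right].
    exists (t * b1); split; [split|split].
    - by move=> b hb; apply: ann_sub; apply: hs.
    - by move=> /ann_mul; rewrite mul1r.
    - by move=> b hb; apply: ann_sub.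
    - by exists a1; split => //; apply/ann_mul.
  pose stp t := epsilon (inhabits 0) (nxt t).
  have stpP t : good t -> nxt t (stp t).
    by move=> gt; rewrite /stp; apply: epsilon_spec; apply: step.
  pose sq n := iter n stp a.
  have gs : forall n, good (sq n).
    elim=> [|n IH] /=.
    - split => // h; apply: hz; rewrite zE; move: h; rewrite /ann tf1 mul1r.
      by [].
    - exact: (stpP _ IH).1.
  have [N hN] := @hnoeth (fun n => ann (sq n)) (fun n => ann_id (sq n))
     (fun n => (stpP _ (gs n)).2.1).
  have [_ [_ [b [hb nb]]]] := stpP _ (gs N).
  by apply: nb; apply/(hN N.+1 (leqnSn N) b).
have [y [hay hpy]] := hprime.
have [[P0 Padd Pmul] nP1 Ppr] := hpy.
pose w := tf y / tf c.
have ann_w p : ann y p <-> inB (tf p * w) by rewrite /ann /w mulrA.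
have nw : ~ inB w.
  by move=> hw; apply: nP1; apply/ann_w; rewrite tf1 mul1r.
have Pc : ann y c.
  apply/ann_w; exists y; rewrite /w mulrCA mulfV // mulr1 //.
have Pmulr : forall x b, ann y x -> ann y (x * b).
  by move=> x b hx; rewrite mulrC; apply: Pmul.
have [[p0 [Pp0 hp0]]|hall] :=
   classic (exists p0, ann y p0 /\ forall u, tf p0 * w = tf u -> ~ ann y u); last first.
  have hall' : forall p, ann y p -> exists u, tf p * w = tf u /\ ann y u.
    move=> p hp; have [u hu] := (ann_w p).1 hp.
    apply: NNPP => hne; apply: hall; exists p; split => // u' hu' hu''.
    by apply: hne; exists u'; split.
  have hseq : forall n, exists pn, ann y pn /\ tf pn = tf c * w ^+ n.
    elim=> [|n [pn [hpn epn]]]; first by exists c; rewrite expr0 mulr1.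
    have [u [hu Pu]] := hall' pn hpn.
    by exists u; split => //; rewrite -hu epn exprSr mulrA.
  apply: nw; apply: (@almost_int w c c0) => n.
  by have [pn [_ epn]] := hseq n; exists pn.
have [u hu] := (ann_w p0).1 Pp0.
have nPu := hp0 u hu.
have key : forall x s, tf x * w = tf s -> x * u = s * p0.
  move=> x s hxs; apply: tf_inj; rewrite !tfM -hxs -hu; ring.
have h1 : is_height1_prime (ann y).
  split => //; first by exists c.
  move=> Q [[Q0 Qadd Qmul] nQ1 Qpr] hQP [q [q0 Qq]] x Px.
  have Qp0 : Q p0.
    apply: NNPP => nQp0.
    have hseq : forall n, exists qn, Q qn /\ tf qn = tf q * w ^+ n.
      elim=> [|n [qn [Qqn eqn]]]; first by exists q; rewrite expr0 mulr1.
      have [s hs] := (ann_w qn).1 (hQP _ Qqn).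
      have Qs : Q s.
        have : Q (s * p0) by rewrite -(key _ _ hs) mulrC; apply: Qmul.
        by case/Qpr.
      by exists s; split => //; rewrite -hs eqn exprSr mulrA.
    apply: nw; apply: (@almost_int w q q0) => n.
    by have [qn [_ eqn]] := hseq n; exists qn.
  have [s hs] := (ann_w x).1 Px.
  have : Q (x * u) by rewrite (key _ _ hs); apply: Qmul.
  by case/Qpr => // /hQP.
have [x [Gx nPx]] := hP _ h1.
have [m hm] := hG x Gx.
have Pxm : ann y (x ^+ m).
  by apply: hay; rewrite /ann -mulrA -zE.
elim: m Pxm {hm} => [|m IH]; first by rewrite expr0.
by rewrite exprS => /Ppr [].
Qed.
End Krull.
Arguments inB {R} z.


Lemma sum_supp (V : nmodType) (f : int -> V) (r1 r2 : seq int) :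
  uniq r1 -> uniq r2 -> (forall i, f i != 0 -> i \in r1) ->
  (forall i, f i != 0 -> i \in r2) ->
  \sum_(i <- r1) f i = \sum_(i <- r2) f i.
Proof.
move=> u1 u2 h1 h2.
have E r : \sum_(i <- r) f i = \sum_(i <- filter (fun i => f i != 0) r) f i.
  rewrite big_filter [in RHS]big_mkcond /=; apply: eq_bigr => i _.
  by case: eqP => // ->.
rewrite E (E r2); apply: perm_big; apply: uniq_perm; try exact: filter_uniq.
move=> i; rewrite !mem_filter.
case hi: (f i != 0) => //=.
by rewrite (h1 _ hi) (h2 _ hi).
Qed.

Section Graded.
Variable B : idomainType.
Variable comp : int -> B -> B.
Hypothesis hgr : is_Zgrading comp.

Lemma compD i x y : comp i (x + y) = comp i x + comp i y.
Proof. by case: hgr. Qed.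
Lemma comp0 i : comp i 0 = 0.
Proof. have h := compD i 0 0; rewrite addr0 in h. by apply: (addrI (comp i 0)); rewrite addr0 -h. Qed.
Lemma compN i x : comp i (- x) = - comp i x.
Proof. by apply/eqP; rewrite -addr_eq0 -compD addNr comp0. Qed.
Lemma compB i x y : comp i (x - y) = comp i x - comp i y.
Proof. by rewrite compD compN. Qed.
Lemma compMn i x n : comp i (x *+ n) = comp i x *+ n.
Proof. by elim: n => [|n IH]; rewrite ?comp0 // !mulrS compD IH. Qed.
Lemma comp_sum i (I : Type) (r : seq I) (f : I -> B) :
  comp i (\sum_(j <- r) f j) = \sum_(j <- r) comp i (f j).
Proof. by elim: r => [|a r IH]; rewrite ?big_nil ?comp0 // !big_cons compD IH. Qed.
Lemma compK i j x : comp i (comp j x) = if i == j then comp j x else 0.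
Proof. by case: hgr. Qed.
Lemma homM {i j x y} : homog comp i x -> homog comp j y -> homog comp (i + j) (x * y).
Proof. by case: hgr => _ _ _; apply. Qed.
Lemma hom_comp i x : homog comp i (comp i x).
Proof. by rewrite /homog compK eqxx. Qed.
Lemma hom_other {i j x} : homog comp j x -> i != j -> comp i x = 0.
Proof. by rewrite /homog => <- /negbTE hij; rewrite compK hij. Qed.

Definition cov (x : B) (r : seq int) := uniq r /\ forall i, comp i x != 0 -> i \in r.

Lemma cov_ex x : exists r, cov x r.
Proof.
case: hgr => _ /(_ x) [s [hs _]] _ _; exists (undup s); split; first exact: undup_uniq.
by move=> i; rewrite mem_undup; apply: contraR => /hs ->.
Qed.

Lemma decomp x r : cov x r -> x = \sum_(i <- r) comp i x.
Proof.
case: hgr => _ /(_ x) [s [hs hx]] _ _ [ur hr].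
rewrite {1}hx; apply: sum_supp => //; first exact: undup_uniq.
by move=> i; rewrite mem_undup; apply: contraR => /hs ->.
Qed.

Lemma comp_shift l e z h : homog comp e h -> comp (l + e) (z * h) = comp l z * h.
Proof.
move=> hh.
have [r [ur hr]] := cov_ex z.
rewrite {1}(@decomp z r (conj ur hr)) mulr_suml comp_sum.
have E : forall i, comp (l + e) (comp i z * h) = if i == l then comp i z * h else 0.
  move=> i; have hi := homM (hom_comp i z) hh.
  case: eqP => [<-|/eqP nil]; first exact: hi.
  apply: (hom_other hi); apply: contra nil => /eqP.
  by move/addIr => ->.
rewrite (eq_bigr _ (fun i _ => E i)) -big_mkcond /=.
case lr: (l \in r).
  by rewrite -big_filter (filter_pred1_uniq ur lr) big_seq1.
have -> : comp l z = 0 by apply/eqP; apply: contraFT lr => /hr.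
rewrite mul0r big_seq_cond big1 // => i /andP [ir /eqP il].
by rewrite il lr in ir.
Qed.


Lemma comp01 : comp 0 1 = 1.
Proof.
have [i hi] : exists i, comp i 1 != 0.
  apply: NNPP => hn; have [r hc] := cov_ex 1.
  have h1 : (1 : B) = 0.
    rewrite {1}(@decomp 1 r hc) big1 // => i _.
    by apply/eqP; apply: contraT => h; exfalso; apply: hn; exists i.
  by move: (oner_neq0 B); rewrite h1 eqxx.
have := @comp_shift 0 i 1 (comp i 1) (hom_comp i 1).
rewrite add0r mul1r hom_comp => /esym h.
by apply: (mulIf hi); rewrite mul1r.
Qed.

Lemma hom1 : homog comp 0 1.
Proof. exact: comp01. Qed.

Lemma homX {i x} n : homog comp i x -> homog comp (i * n%:Z) (x ^+ n).
Proof.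
move=> hx; elim: n => [|n IH]; first by rewrite mulr0 expr0; exact: hom1.
have -> : i * n.+1%:Z = i + i * n%:Z by rewrite -addn1 PoszD mulrDr mulr1 addrC.
by rewrite exprS; apply: homM.
Qed.

Lemma hom0 i : homog comp i 0.
Proof. by rewrite /homog comp0. Qed.

Lemma homD {i x y} : homog comp i x -> homog comp i y -> homog comp i (x + y).
Proof. by rewrite /homog compD => -> ->. Qed.

Lemma homN {i x} : homog comp i x -> homog comp i (- x).
Proof. by rewrite /homog compN => ->. Qed.

Lemma homMn {i x} n : homog comp i x -> homog comp i (x *+ n).
Proof. by rewrite /homog compMn => ->. Qed.

Variable d : nat.
Local Notation A := (in_veronese comp d).

Lemma A0 : A 0.
Proof. by move=> i _; rewrite comp0. Qed.
Lemma AD x y : A x -> A y -> A (x + y).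
Proof. by move=> hx hy i hi; rewrite compD hx // hy // addr0. Qed.
Lemma AN x : A x -> A (- x).
Proof. by move=> hx i hi; rewrite compN hx // oppr0. Qed.
Lemma AB x y : A x -> A y -> A (x - y).
Proof. by move=> hx hy; apply: AD => //; apply: AN. Qed.
Lemma AMn x n : A x -> A (x *+ n).
Proof. by move=> hx i hi; rewrite compMn hx // mul0rn. Qed.
Lemma A_sum (I : Type) (r : seq I) (f : I -> B) :
  (forall j, A (f j)) -> A (\sum_(j <- r) f j).
Proof.
move=> hf; elim: r => [|a r IH]; first by rewrite big_nil; exact: A0.
by rewrite big_cons; apply: AD.
Qed.
Lemma A_hom {i x} : homog comp i x -> (d%:Z %| i)%Z -> A x.
Proof.
move=> hx hdi j hj; apply: (hom_other hx); apply: contraNneq hj => ->; exact: hdi.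
Qed.
Lemma A_comp i y : A y -> A (comp i y).
Proof.
move=> hy; case hdi: (d%:Z %| i)%Z; first exact: (A_hom (hom_comp i y)).
by rewrite hy ?hdi //; exact: A0.
Qed.
Lemma AM x y : A x -> A y -> A (x * y).
Proof.
move=> hx hy l hl.
have [r hc] := cov_ex y.
rewrite (@decomp y r hc) mulr_sumr comp_sum big1 // => j _.
have := @comp_shift (l - j) j x (comp j y) (hom_comp j y).
rewrite subrK => ->.
case hj: (d%:Z %| j)%Z.
  rewrite hx ?mul0r //; apply: contra hl => h.
  by rewrite -(subrK j l); apply: rpredD.
by rewrite hy ?mulr0 // hj.
Qed.
Lemma A1 : A 1.
Proof. exact: (A_hom hom1 (dvdz0 _)). Qed.
Lemma AX x n : A x -> A (x ^+ n).
Proof.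
move=> hx; elim: n => [|n IH]; first by rewrite expr0; exact: A1.
by rewrite exprS; apply: AM.
Qed.

End Graded.


Section Deriv.
Variable B : idomainType.
Variable comp : int -> B -> B.
Hypothesis hgr : is_Zgrading comp.
Hypothesis hchar : char0 B.
Variable d : nat.
Hypothesis hd : (2 <= d)%N.
Hypothesis hdunit : (d%:R : B) \is a GRing.unit.
Variable delta : B -> B.
Local Notation A := (in_veronese comp d).
Hypothesis hdelta : is_derivation_on A delta.
Local Notation tf := (@FracField.tofrac B).
Local Notation F := {fraction B}.
Local Notation inB := (@inB B).

Lemma dE : d = d.-1.+1.
Proof. by case: d hd. Qed.

Lemma mulrn_eq0' (x : B) n : (x *+ n.+1 == 0) = (x == 0).
Proof. by rewrite -mulr_natr mulf_eq0 (negbTE (hchar n)) orbF. Qed.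

Lemma dnz : (d%:R : B) != 0.
Proof. by rewrite dE; apply: hchar. Qed.
Lemma dnzF : (d%:R : F) != 0.
Proof. have := @tfMn B 1 d; rewrite tf1 => <-. by rewrite tf_eq0 dnz. Qed.

Lemma dlA x : A x -> A (delta x). Proof. by case: hdelta => h _ _; apply: h. Qed.
Lemma dlD x y : A x -> A y -> delta (x + y) = delta x + delta y.
Proof. by case: hdelta => _ h _; apply: h. Qed.
Lemma dlM x y : A x -> A y -> delta (x * y) = delta x * y + x * delta y.
Proof. by case: hdelta => _ _ h; apply: h. Qed.
Lemma dl0 : delta 0 = 0.
Proof.
have h := dlD (@A0 B comp hgr d) (@A0 B comp hgr d); rewrite addr0 in h.
by apply: (addrI (delta 0)); rewrite addr0 -h.
Qed.
Lemma dlN x : A x -> delta (- x) = - delta x.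
Proof.
move=> hx; have h := dlD hx (AN hgr hx); rewrite subrr dl0 in h.
by apply/eqP; rewrite -addr_eq0 addrC -h.
Qed.
Lemma dlB x y : A x -> A y -> delta (x - y) = delta x - delta y.
Proof. by move=> hx hy; rewrite dlD ?dlN //; apply: AN. Qed.
Lemma dl_sum (I : Type) (r : seq I) (f : I -> B) :
  (forall j, A (f j)) -> delta (\sum_(j <- r) f j) = \sum_(j <- r) delta (f j).
Proof.
move=> hf; elim: r => [|a r IH]; first by rewrite !big_nil dl0.
by rewrite !big_cons dlD ?IH //; apply: A_sum.
Qed.
Lemma dlMn x n : A x -> delta (x *+ n) = delta x *+ n.
Proof.
move=> hx; elim: n => [|n IH]; first by rewrite !mulr0n dl0.
by rewrite !mulrS dlD ?IH //; apply: (AMn hgr).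
Qed.
Lemma dlX y n : A y -> delta (y ^+ n.+1) = (y ^+ n * delta y) *+ n.+1.
Proof.
move=> hy; elim: n => [|n IH]; first by rewrite expr0 mul1r expr1.
rewrite exprS dlM ?IH //; last exact: AX.
by rewrite exprS; ring.
Qed.
Lemma dl1 : delta 1 = 0.
Proof.
have := @dlX 1 1 (@A1 B comp hgr d); rewrite !expr1n mul1r mulr2n => h.
by apply: (addrI (delta 1)); rewrite -h addr0.
Qed.

Lemma A_tfree (z : B) n : (0 < n)%N -> A (z *+ n) -> A z.
Proof.
case: n => // n _ h i hi; apply/eqP; rewrite -(mulrn_eq0' _ n) -compMn //; exact/eqP/h.
Qed.

Lemma A_cancel (z h : B) e : homog comp e h -> h != 0 -> A h -> A (z * h) -> A z.
Proof.
move=> hh h0 hA hz i hi.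
apply/eqP; rewrite -(mulIr_eq0 _ (mulIf h0)) -(comp_shift hgr i z hh).
apply/eqP; apply: hz; apply: contra hi => hdiv.
have hde : (d%:Z %| e)%Z.
  apply: NNPP => nde; move/negP: h0; apply; apply/eqP.
  by rewrite -hh; apply: hA; apply/negP.
by rewrite -(addrK e i); apply: rpredB.
Qed.


Definition Eh (u : B) : F := tf (delta (u ^+ d)) / (d%:R * tf u ^+ d.-1).

Lemma homA_pow u i : homog comp i u -> A (u ^+ d).
Proof.
move=> hu; apply: (A_hom hgr (homX hgr d hu)).
by rewrite mulrC; apply: dvdz_mulr; apply: dvdzz.
Qed.

Lemma hom_pow_mul w u i : homog comp i w -> homog comp i u -> A (w ^+ d.-1 * u).
Proof.
move=> hw hu; apply: (A_hom hgr (homM hgr (homX hgr d.-1 hw) hu)).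
have -> : i * (d.-1)%:Z + i = d%:Z * i.
  by rewrite [in RHS]dE -addn1 PoszD mulrDl mul1r mulrC.
by apply: dvdz_mulr; apply: dvdzz.
Qed.

Lemma Eh0 : Eh 0 = 0.
Proof. by rewrite /Eh expr0n dE /= dl0 tf0 mul0r. Qed.

Lemma den_nz u : u != 0 -> d%:R * tf u ^+ d.-1 != 0.
Proof. by move=> u0; rewrite mulf_neq0 ?dnzF // expf_neq0 // tf_eq0. Qed.

Lemma Eh_char u : u != 0 -> d%:R * tf u ^+ d.-1 * Eh u = tf (delta (u ^+ d)).
Proof. by move=> u0; rewrite /Eh mulrC divfK // den_nz. Qed.

Lemma Eh_A w : A w -> Eh w = tf (delta w).
Proof.
move=> hw; case w0: (w == 0); first by rewrite (eqP w0) Eh0 dl0 tf0.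
apply: (mulfI (den_nz (negbT w0))); rewrite Eh_char ?w0 //.
rewrite {1}dE dlX // -dE tfMn tfM tfX.
by rewrite -mulrA mulr_natl.

Qed.

Lemma Eh_prod u v i j : homog comp i u -> homog comp j v -> u != 0 -> v != 0 ->
  tf (delta (u ^+ d * v ^+ d)) =
  d%:R * (tf u * tf v) ^+ d.-1 * (Eh u * tf v + tf u * Eh v).
Proof.
move=> hu hv u0 v0.
rewrite dlM; [|exact: homA_pow hu|exact: homA_pow hv].
rewrite tfD !tfM -(Eh_char u0) -(Eh_char v0) !tfX.
have [e de] : exists e, d = e.+1 by exists d.-1; exact: dE.
rewrite de /= !exprSr exprMn. set E1 := Eh u. set E2 := Eh v. set U := tf u. set V := tf v. set n := e.+1%:R. ring.
Qed.

Lemma Eh_two u v i j : homog comp i u -> homog comp j v -> A (u * v) ->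
  tf (delta (u * v)) = Eh u * tf v + tf u * Eh v.
Proof.
move=> hu hv huv.
case u0: (u == 0); first by rewrite (eqP u0) mul0r dl0 tf0 Eh0 !mul0r addr0.
case v0: (v == 0); first by rewrite (eqP v0) mulr0 dl0 tf0 Eh0 !mulr0 addr0.
have uv0 : u * v != 0 by rewrite mulf_neq0 ?u0 ?v0.
apply: (mulfI (den_nz uv0)).
rewrite tfM -(Eh_prod hu hv) ?u0 ?v0 // -exprMn [in RHS]dE dlX // -dE tfMn tfM tfX -tfM.
by rewrite -mulrA mulr_natl.

Qed.

Lemma Eh_mul u v i j : homog comp i u -> homog comp j v ->
  Eh (u * v) = Eh u * tf v + tf u * Eh v.
Proof.
move=> hu hv.
case u0: (u == 0); first by rewrite (eqP u0) mul0r tf0 Eh0 !mul0r addr0.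
case v0: (v == 0); first by rewrite (eqP v0) mulr0 tf0 Eh0 !mulr0 addr0.
have uv0 : u * v != 0 by rewrite mulf_neq0 ?u0 ?v0.
apply: (mulfI (den_nz uv0)).
by rewrite Eh_char // tfM -(Eh_prod hu hv) ?u0 ?v0 // -exprMn.
Qed.

Lemma Eh_neg u i : homog comp i u -> Eh (- u) = - Eh u.
Proof.
move=> hu.
have h1 : homog comp 0 (-1 : B) by apply: (homN hgr); exact: (hom1 hgr).
rewrite -mulrN1 (Eh_mul hu h1) (Eh_A (AN hgr (@A1 B comp hgr d))).
by rewrite dlN ?dl1 ?oppr0 ?tf0 ?mulr0 ?addr0 ?tfN ?tf1 ?mulrN1 //; exact: A1.
Qed.

Lemma Eh_add u v i : homog comp i u -> homog comp i v -> Eh (u + v) = Eh u + Eh v.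
Proof.
move=> hu hv; set w := u + v.
have hw : homog comp i w := homD hgr hu hv.
case w0: (w == 0).
  move/eqP: (w0) => w0'; rewrite w0' Eh0.
  have -> : v = - u by apply/eqP; rewrite -addr_eq0 addrC -/w w0'.
  by rewrite (Eh_neg hu) subrr.
have hp := homX hgr d.-1 hw.
have hpu := hom_pow_mul hw hu; have hpv := hom_pow_mul hw hv.
have hpw := hom_pow_mul hw hw.
have E1 := Eh_two hp hu hpu; have E2 := Eh_two hp hv hpv; have E3 := Eh_two hp hw hpw.
have : tf (delta (w ^+ d.-1 * u)) + tf (delta (w ^+ d.-1 * v)) =
       tf (delta (w ^+ d.-1 * w)) by rewrite -tfD -dlD // -mulrDr.
rewrite E1 E2 E3 => h.
have P0 : tf (w ^+ d.-1) != 0 by rewrite tf_eq0 expf_neq0 ?w0.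
have eW : tf w = tf u + tf v by rewrite tfD.
rewrite eW in h.
apply: (mulfI P0); apply/eqP; rewrite -subr_eq0; apply/eqP.
move: h; set a := Eh (w ^+ d.-1); set P := tf (w ^+ d.-1); set x := Eh w.
set U := tf u; set V := tf v; set Eu := Eh u; set Ev := Eh v => h.
have -> : P * x - P * (Eu + Ev) = (a * (U + V) + P * x) - (a * U + P * Eu + (a * V + P * Ev)).
  ring.
by rewrite h subrr.
Qed.

Lemma tf_sum (I : Type) (r : seq I) (f : I -> B) :
  tf (\sum_(j <- r) f j) = \sum_(j <- r) tf (f j).
Proof. exact: rmorph_sum. Qed.

Definition sx (x : B) : seq int := epsilon (inhabits [::]) (cov comp x).
Lemma sxP x : cov comp x (sx x).
Proof. by rewrite /sx; apply: epsilon_spec; apply: cov_ex. Qed.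

Definition E (x : B) : F := \sum_(i <- sx x) Eh (comp i x).

Lemma E_cov x r : cov comp x r -> E x = \sum_(i <- r) Eh (comp i x).
Proof.
case: (sxP x) => u1 h1 [u2 h2]; apply: sum_supp => // i hi.
- by apply: h1; apply: contraNneq hi => ->; rewrite Eh0.
- by apply: h2; apply: contraNneq hi => ->; rewrite Eh0.
Qed.

Lemma E_hom u i : homog comp i u -> E u = Eh u.
Proof.
move=> hu; rewrite (@E_cov u [:: i]) ?big_seq1 ?hu //; split => // j.
by rewrite inE; apply: contraR => hj; rewrite (hom_other hgr hu hj).
Qed.

Lemma cov_cat x y : cov comp x (undup (sx x ++ sx y)) /\ cov comp y (undup (sx x ++ sx y)) /\
   cov comp (x + y) (undup (sx x ++ sx y)).
Proof.
case: (sxP x) => _ h1; case: (sxP y) => _ h2.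
split; [|split]; (split; first exact: undup_uniq) => i hi; rewrite mem_undup mem_cat.
- by apply/orP; left; apply: h1.
- by apply/orP; right; apply: h2.
- move: hi; rewrite (compD hgr); case hx: (comp i x == 0).
    by rewrite (eqP hx) add0r => /h2 hy; apply/orP; right.
  by move=> _; apply/orP; left; apply: h1; rewrite hx.
Qed.

Lemma ED x y : E (x + y) = E x + E y.
Proof.
have [cx [cy cxy]] := cov_cat x y.
rewrite (E_cov cxy) (E_cov cx) (E_cov cy) -big_split; apply: eq_bigr => i _.
by rewrite (compD hgr) (Eh_add (hom_comp hgr i x) (hom_comp hgr i y)).
Qed.

Lemma E0 : E 0 = 0.
Proof. by apply: (addrI (E 0)); rewrite -ED !addr0. Qed.

Lemma E_sum (I : Type) (r : seq I) (f : I -> B) :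
  E (\sum_(j <- r) f j) = \sum_(j <- r) E (f j).
Proof.
elim: r => [|a r IH]; first by rewrite !big_nil E0.
by rewrite !big_cons ED IH.
Qed.

Lemma E_dec x r : cov comp x r -> E x = \sum_(i <- r) E (comp i x).
Proof.
move=> hc; rewrite (E_cov hc); apply: eq_bigr => i _.
by rewrite (E_hom (hom_comp hgr i x)).
Qed.

Lemma EM x y : E (x * y) = E x * tf y + tf x * E y.
Proof.
have [rx cx] := cov_ex hgr x; have [ry cy] := cov_ex hgr y.
have ex := decomp hgr cx; have ey := decomp hgr cy.
have -> : x * y = \sum_(i <- rx) \sum_(j <- ry) comp i x * comp j y.
  rewrite {1}ex {1}ey mulr_suml; apply: eq_bigr => i _; by rewrite mulr_sumr.
have tx : tf x = \sum_(i <- rx) tf (comp i x) by rewrite {1}ex tf_sum.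
have ty : tf y = \sum_(j <- ry) tf (comp j y) by rewrite {1}ey tf_sum.
rewrite tx ty (E_dec cx) (E_dec cy) E_sum !mulr_suml -big_split /=.
apply: eq_bigr => i _.
rewrite E_sum !mulr_sumr -big_split /=; apply: eq_bigr => j _.
rewrite (E_hom (homM hgr (hom_comp hgr i x) (hom_comp hgr j y))).
rewrite (Eh_mul (hom_comp hgr i x) (hom_comp hgr j y)).
by rewrite (E_hom (hom_comp hgr i x)) (E_hom (hom_comp hgr j y)).
Qed.

Lemma E_A y : A y -> E y = tf (delta y).
Proof.
move=> hy; have [r cy] := cov_ex hgr y.
rewrite (E_cov cy) {2}(decomp hgr cy) dl_sum; last by move=> j; apply: A_comp.
rewrite rmorph_sum; apply: eq_bigr => i _.
by rewrite Eh_A //; apply: A_comp.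
Qed.

Lemma inB_tf b : inB (tf b). Proof. by exists b. Qed.
Lemma inB_add z1 z2 : inB z1 -> inB z2 -> inB (z1 + z2).
Proof. by move=> [b1 ->] [b2 ->]; exists (b1 + b2); rewrite tfD. Qed.
Lemma inB_sub z1 z2 : inB z1 -> inB z2 -> inB (z1 - z2).
Proof. by move=> [b1 ->] [b2 ->]; exists (b1 - b2); rewrite tfB. Qed.
Lemma inB_mul z1 z2 : inB z1 -> inB z2 -> inB (z1 * z2).
Proof. by move=> [b1 ->] [b2 ->]; exists (b1 * b2); rewrite tfM. Qed.
Lemma inB_sum (I : Type) (r : seq I) (f : I -> F) :
  (forall j, inB (f j)) -> inB (\sum_(j <- r) f j).
Proof.
move=> hf; elim: r => [|a r IH]; first by rewrite big_nil; exists 0; rewrite tf0.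
by rewrite big_cons; apply: inB_add.
Qed.

Lemma bezout_k (i j : int) : coprimez i d%:Z -> exists k : nat, (d%:Z %| j + k%:Z * i)%Z.
Proof.
case/coprimezP => [[a b]] /= hab.
set t := (- (j * a))%R.
have d0 : d%:Z != 0 by rewrite dE.
exists `|(t %% d%:Z)%Z|%N; apply/dvdzP.
exists (j * b - (t %/ d%:Z)%Z * i).
rewrite gez0_abs ?modz_ge0 //.
have hm : (t %% d%:Z)%Z = t - (t %/ d%:Z)%Z * d%:Z by rewrite {2}(divz_eq t d%:Z) addrC addKr.
rewrite hm /t; set q := (t %/ d%:Z)%Z.
have : j + (- (j * a) - q * d%:Z) * i - (j * b - q * i) * d%:Z = j * (1 - (a * i + b * d%:Z)).
  by ring.
by rewrite hab subrr mulr0 => /eqP; rewrite subr_eq0 => /eqP.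
Qed.

Hypothesis hnoeth : noetherian_ring B.
Hypothesis hnorm : normal_domain B.
Hypothesis hX : forall P : B -> Prop, is_height1_prime P ->
          exists x, in_Xd comp d x /\ ~ P x.

Lemma E1 : E 1 = 0.
Proof. by rewrite (E_A (@A1 B comp hgr d)) dl1 tf0. Qed.

Lemma Ex_inB x i : homog comp i x -> x != 0 -> inB (tf x ^+ d.-1 * E x).
Proof.
move=> hx x0; rewrite (E_hom hx).
exists ((d%:R)^-1 * delta (x ^+ d)).
have hd1 : tf ((d%:R)^-1 : B) * (d%:R : F) = 1.
  have -> : (d%:R : F) = tf (d%:R) by rewrite tfMn tf1.
  by rewrite -tfM mulVr // tf1.
by rewrite tfM -(Eh_char x0) !mulrA hd1 mul1r.
Qed.

Lemma Epow_inB x i n : homog comp i x -> x != 0 ->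
  inB (tf x ^+ (n * d.-1) * E (x ^+ n)).
Proof.
move=> hx x0; elim: n => [|n IH].
  by rewrite expr0 E1 mulr0; exists 0; rewrite tf0.
rewrite exprS EM mulSn exprD.
have -> : tf x ^+ d.-1 * tf x ^+ (n * d.-1) * (E x * tf (x ^+ n) + tf x * E (x ^+ n)) =
  (tf x ^+ d.-1 * E x) * (tf (x ^+ n) * tf x ^+ (n * d.-1)) +
  (tf x * tf x ^+ d.-1) * (tf x ^+ (n * d.-1) * E (x ^+ n)) by ring.
apply: inB_add; apply: inB_mul => //.
- exact: (Ex_inB hx x0).
- by rewrite -tfX -tfM; exact: inB_tf.
- by rewrite -tfX -tfM; exact: inB_tf.
Qed.

Lemma E_int_hom u i : homog comp i u -> inB (E u).
Proof.
move=> hu; apply: (krull hnoeth hnorm hX) => x [x0 [ix [hx hcop]]].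
have [k hk] := bezout_k i hcop.
have hux : A (u * x ^+ k).
  apply: (A_hom hgr (homM hgr hu (homX hgr k hx))).
  by rewrite mulrC.
have e1 := E_A hux; rewrite EM in e1.
exists (k * d.-1 + k)%N.
have hp := Epow_inB k hx x0.
have -> : tf (x ^+ (k * d.-1 + k)) * E u = tf (x ^+ (k * d.-1)) * tf (delta (u * x ^+ k))
    - tf u * (tf x ^+ (k * d.-1) * E (x ^+ k)).
  by rewrite -e1 !tfX exprD; ring.
apply: inB_sub; apply: inB_mul => //; exact: inB_tf.
Qed.

Lemma E_inB x : inB (E x).
Proof.
have [r cx] := cov_ex hgr x.
rewrite (E_dec cx); apply: inB_sum => j.
exact: (E_int_hom (hom_comp hgr j x)).
Qed.

Definition D (x : B) : B := epsilon (inhabits 0) (fun b => tf b = E x).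
Lemma DE x : tf (D x) = E x.
Proof.
rewrite /D; apply: (epsilon_spec (inhabits 0) (fun b => tf b = E x)).
by have [b ->] := E_inB x; exists b.
Qed.

Lemma D_der : is_derivation D.
Proof.
split=> x y; apply: (@tf_inj B).
  by rewrite tfD !DE ED.
by rewrite tfD !tfM !DE EM.
Qed.

Lemma D_ext x : A x -> D x = delta x.
Proof. by move=> hx; apply: (@tf_inj B); rewrite DE E_A. Qed.

Local Notation dn n := (iter n delta).

Lemma iter_A n x : A x -> A (dn n x).
Proof. by move=> hx; elim: n => [|n IH] //=; apply: dlA. Qed.
Lemma iter0 n : dn n 0 = 0.
Proof. by elim: n => [|n IH] //=; rewrite IH dl0. Qed.
Lemma iterD_A n x y : A x -> A y -> dn n (x + y) = dn n x + dn n y.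
Proof.
move=> hx hy; elim: n => [|n IH] //=.
by rewrite IH dlD //; apply: iter_A.
Qed.
Lemma iterMn_A n x m : A x -> dn n (x *+ m) = dn n x *+ m.
Proof.
move=> hx; elim: n => [|n IH] //=.
by rewrite IH dlMn //; apply: iter_A.
Qed.
Lemma iterB_A n x y : A x -> A y -> dn n (x - y) = dn n x - dn n y.
Proof.
move=> hx hy; elim: n => [|n IH] //=.
by rewrite IH dlB //; apply: iter_A.
Qed.
Lemma iter_more n m x : dn n x = 0 -> (n <= m)%N -> dn m x = 0.
Proof.
move=> h /subnK <-; rewrite iterD h; exact: iter0.
Qed.

Lemma L1 N : forall p q y z, (p + q)%N = N -> A y -> A z -> dn p y = 0 -> dn q z = 0 ->
  dn (p + q).-1 (y * z) = 0.
Proof.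
elim: N => [|N IH] p q y z hN hy hz hp hq.
all: case: p hN hp => [|p] hN hp; first by rewrite /= in hp; rewrite hp mul0r iter0.
all: case: q hN hq => [|q] hN hq; first by rewrite /= in hq; rewrite hq mulr0 iter0.
  by rewrite addSn in hN.
have hN' : (p + q.+1)%N = N by move: hN; rewrite addSn => -[].
rewrite addSn addnS iterSr dlM // iterD_A; try by apply: (AM hgr) => //; apply: dlA.
have e1 := IH p q.+1 (delta y) z hN' (dlA hy) hz.
have e2 := IH p.+1 q y (delta z) _ hy (dlA hz).
rewrite addnS /= in e1; rewrite addSn /= in e2.
rewrite e1; first rewrite e2; first by rewrite addr0.
- by rewrite -hN' addnS.
- exact: hp.
- by rewrite -iterSr.
- by rewrite -iterSr.
- exact: hq.
Qed.

Lemma L2_const a w s : A a -> A w -> delta a = 0 -> dn s (a * w) = a * dn s w.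
Proof.
move=> ha hw h0; elim: s => [|s IH] //=.
by rewrite IH dlM ?h0 ?mul0r ?add0r //; apply: iter_A.
Qed.

Lemma L2 N : forall q s a y, (q + s)%N = N -> A a -> A y -> dn q.+1 a = 0 ->
  dn s.+1 y = 0 -> dn (q + s) (a * y) = (dn q a * dn s y) *+ 'C(q + s, q).
Proof.
elim: N => [|N IH] q s a y hN ha hy hq hs.
all: case: q hN hq => [|q] hN hq.
1,3: by rewrite /= in hq; rewrite add0n bin0 mulr1n (L2_const s ha hy hq).
all: case: s hN hs => [|s] hN hs.
1,3: rewrite /= in hs; rewrite addn0 binn mulr1n mulrC (L2_const _ hy ha hs) mulrC //.
  by rewrite addSn in hN.
have hN1 : (q + s.+1)%N = N by move: hN; rewrite addSn => -[].
have hN2 : (q.+1 + s)%N = N by rewrite addSnnS.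
rewrite addSn iterSr dlM // iterD_A; try by apply: (AM hgr) => //; apply: dlA.
have e1 := IH q s.+1 (delta a) y hN1 (dlA ha) hy.
have e2 := IH q.+1 s a (delta y) hN2 ha (dlA hy).
rewrite e1; last 2 first.
- by rewrite -iterSr.
- exact: hs.
rewrite -addSnnS e2; last 2 first.
- exact: hq.
- by rewrite -iterSr.
by rewrite -!iterSr -mulrnDr addSnnS binS addnC.
Qed.

Lemma nu_ex y n : y != 0 -> dn n y = 0 -> exists s, dn s.+1 y = 0 /\ dn s y != 0.
Proof.
move=> y0; elim: n => [|n IH] /=; first by move=> h; rewrite h eqxx in y0.
move=> h; case hn: (dn n y == 0); first exact: IH (eqP hn).
by exists n; rewrite /= h hn.
Qed.

Lemma mulrn_eq0P (x : B) n : (0 < n)%N -> x *+ n = 0 -> x = 0.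
Proof. by case: n => // n _ /eqP; rewrite mulrn_eq0' => /eqP. Qed.

Lemma LN_step (hLN : locally_nilpotent_on A delta) a y y' p :
  A a -> a != 0 -> A y -> A y' -> (0 < p)%N -> dn p y = 0 ->
  (a * y') *+ d = (a * delta y) *+ d - (y * delta a) *+ d.-1 ->
  dn p.-1 y' = 0.
Proof.
move=> ha a0 hy hy' p0 hp hrel.
have [n0 hn0] := hLN a ha; have [q [hq1 hq]] := nu_ex a0 hn0.
have h1 : dn (q + p.-1) (a * delta y) = 0.
  have := @L1 _ q.+1 p.-1 a (delta y) erefl ha (dlA hy) hq1.
  rewrite addSn /=; apply; by rewrite -iterSr prednK.
have h2 : dn (q + p.-1) (y * delta a) = 0.
  have := @L1 _ p q y (delta a) erefl hy (dlA ha) hp.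
  rewrite -{1}(prednK p0) addSn /= addnC; apply; by rewrite -iterSr.
have h3 : dn (q + p.-1) (a * y') = 0.
  apply: (@mulrn_eq0P _ d); first by rewrite dE.
  rewrite -iterMn_A; last by apply: (AM hgr).
  rewrite hrel iterB_A; last 2 first.
  - by apply: (AMn hgr); apply: (AM hgr) => //; apply: dlA.
  - by apply: (AMn hgr); apply: (AM hgr) => //; apply: dlA.
  rewrite !iterMn_A ?h1 ?h2 ?mul0rn ?subrr //; apply: (AM hgr) => //; exact: dlA.
apply: NNPP => hne.
have y'0 : y' != 0 by apply/eqP => hy0; apply: hne; rewrite hy0; exact: iter0.
have [n1 hn1] := hLN y' hy'; have [s [hs1 hs]] := nu_ex y'0 hn1.
have sge : (p.-1 <= s)%N.
  by rewrite leqNgt; apply/negP => hlt; apply: hne; apply: (iter_more hs1).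
have := @L2 _ q s a y' erefl ha hy' hq1 hs1.
rewrite (iter_more h3) ?leq_add2l // => /esym /mulrn_eq0P.
rewrite bin_gt0 leq_addr => /(_ isT) /eqP.
by rewrite mulf_eq0 (negbTE hq) (negbTE hs).
Qed.

Section GenDer.
Variable f : B -> B.
Hypothesis hf : is_derivation f.
Lemma gd_add x y : f (x + y) = f x + f y. Proof. by case: hf. Qed.
Lemma gd_mul x y : f (x * y) = f x * y + x * f y. Proof. by case: hf. Qed.
Lemma gd0 : f 0 = 0.
Proof. have h := gd_add 0 0; rewrite addr0 in h; by apply: (addrI (f 0)); rewrite addr0 -h. Qed.
Lemma gd_sum (I : Type) (r : seq I) (g : I -> B) :
  f (\sum_(j <- r) g j) = \sum_(j <- r) f (g j).
Proof. by elim: r => [|a r IH]; rewrite ?big_nil ?gd0 // !big_cons gd_add IH. Qed.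
Lemma gd_pow x n : f (x ^+ n.+1) = (x ^+ n * f x) *+ n.+1.
Proof.
elim: n => [|n IH]; first by rewrite expr0 mul1r expr1.
by rewrite exprS gd_mul IH exprS; ring.
Qed.
Lemma gd_iter0 n : iter n f 0 = 0.
Proof. by elim: n => [|n IH] //=; rewrite IH gd0. Qed.
Lemma gd_iterD n x y : iter n f (x + y) = iter n f x + iter n f y.
Proof. by elim: n => [|n IH] //=; rewrite IH gd_add. Qed.
Lemma gd_more n m x : iter n f x = 0 -> (n <= m)%N -> iter m f x = 0.
Proof. by move=> h /subnK <-; rewrite iterD h gd_iter0. Qed.
End GenDer.

Lemma D_uniq D' : is_derivation D' -> (forall x, A x -> D' x = delta x) ->
  forall x, D' x = D x.
Proof.
move=> hD' hext x.
have hom : forall u i, homog comp i u -> D' u = D u.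
  move=> u i hu; case u0: (u == 0); first by rewrite (eqP u0) (gd0 hD') (gd0 D_der).
  have hA := homA_pow hu.
  have := hext _ hA; rewrite -(D_ext hA) dE (gd_pow hD') (gd_pow D_der) -dE.
  move/eqP; rewrite -subr_eq0 -mulrnBl -mulrBr => /eqP /(mulrn_eq0P _).
  rewrite dE => /(_ isT) /eqP; rewrite mulf_eq0 expf_eq0 u0 andbF /= subr_eq0.
  by move/eqP.
have [r cx] := cov_ex hgr x.
rewrite (decomp hgr cx) (gd_sum hD') (gd_sum D_der); apply: eq_bigr => i _.
exact: (hom _ _ (hom_comp hgr i x)).
Qed.

Lemma D_rel u w :
  let a := u ^+ d in
  (a * (D w * u ^+ d.-1)) *+ d =
  (a * D (w * u ^+ d.-1)) *+ d - ((w * u ^+ d.-1) * D a) *+ d.-1.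
Proof.
move=> a; rewrite /a.
have [e de] : exists e, d = e.+2 by exists d.-2; case: d hd => [|[|n]].
rewrite de /= (gd_mul D_der) !(gd_pow D_der) !exprS.
set Du := D u; set Dw := D w; set U := u ^+ e.
ring.
Qed.

Lemma D_nil_hom (hLN : locally_nilpotent_on A delta) u i :
  homog comp i u -> exists n, iter n D u = 0.
Proof.
move=> hu; case u0: (u == 0); first by exists 1%N; rewrite (eqP u0) /= (gd0 D_der).
pose y n := iter n D u * u ^+ d.-1.
pose a := u ^+ d.
have ha : A a := homA_pow hu.
have a0 : a != 0 by rewrite expf_neq0 ?u0.
have hua : homog comp (i * d%:Z) a := homX hgr d hu.
have rel : forall n, A (y n) ->
    (a * y n.+1) *+ d = (a * delta (y n)) *+ d - (y n * delta a) *+ d.-1.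
  move=> n hyn; rewrite -(D_ext hyn) -(D_ext ha); exact: D_rel.
have yA : forall n, A (y n).
  elim=> [|n IH].
    by rewrite /y /= -exprS -dE.
  have h1 : A ((a * y n.+1) *+ d).
    rewrite rel //; apply: (AB hgr); apply: (AMn hgr); apply: (AM hgr) => //; exact: dlA.
  have h2 := A_tfree (ltnW hd) h1.
  by apply: (A_cancel hua a0 ha); rewrite mulrC.
have [p0 hp0] := hLN _ (yA 0%N).
have claim : forall n, (n <= p0)%N -> iter (p0 - n) delta (y n) = 0.
  elim=> [|n IH] hn; first by rewrite subn0.
  have := LN_step hLN ha a0 (yA n) (yA n.+1) _ (IH (ltnW hn)) (rel n (yA n)).
  by rewrite subnS; apply; rewrite subn_gt0.
have := claim p0 (leqnn p0); rewrite subnn /= /y => /eqP.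
rewrite mulf_eq0 expf_eq0 u0 andbF orbF => /eqP h.
by exists p0.
Qed.

Lemma D_nil (hLN : locally_nilpotent_on A delta) x : exists n, iter n D x = 0.
Proof.
have [r cx] := cov_ex hgr x.
rewrite (decomp hgr cx).
elim: r {cx} => [|j r [n2 hn2]]; first by exists 0%N; rewrite big_nil.
have [n1 hn1] := D_nil_hom hLN (hom_comp hgr j x).
exists (n1 + n2)%N; rewrite big_cons (gd_iterD D_der).
rewrite (gd_more D_der hn1 (leq_addr _ _)) (gd_more D_der hn2 (leq_addl _ _)).
by rewrite addr0.
Qed.
End Deriv.

Theorem lemma3p9 (B : idomainType) (comp : int -> B -> B) (d : nat)
  (hgr : is_Zgrading comp) (hnoeth : noetherian_ring B) (hnorm : normal_domain B)
  (hchar : char0 B) (he : e_eq1 comp)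
  (hd : (2 <= d)%N) (hdunit : (d%:R : B) \is a GRing.unit)
  (hX : forall P : B -> Prop, is_height1_prime P ->
          exists x, in_Xd comp d x /\ ~ P x)
  (delta : B -> B) (hdelta : is_derivation_on (in_veronese comp d) delta) :
  exists D : B -> B,
    [/\ is_derivation D,
        (forall x, in_veronese comp d x -> D x = delta x),
        (forall D' : B -> B, is_derivation D' ->
            (forall x, in_veronese comp d x -> D' x = delta x) -> forall x, D' x = D x) &
        (locally_nilpotent_on (in_veronese comp d) delta ->
            locally_nilpotent_on (fun _ => True) D)].
Proof.
exists (D comp d delta); split.
- by apply: D_der.
- by move=> x hx; apply: D_ext.
- by move=> D' hD' hext x; apply: D_uniq.
- by move=> hLN x _; apply: D_nil.
Qed.
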